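(* For any binary-input symmetric CQ channel $W$, $\delta(W)=F(W^\perp)$, where $\delta(W)=\tfrac12\|W(0)-W(1)\|_1$ and $F(W^\perp)=F(W^\perp(0),W^\perp(1))$ with $F(\rho,\sigma)=\|\sqrt\rho\sqrt\sigma\|_1$.
   Context: A binary-input CQ channel is a map $W$ assigning to each $z\in\{0,1\}=\mathbb Z_2$ a density operator $W(z)$ on a finite-dimensional Hilbert space $\mathcal H_B$; it is symmetric if there is a unitary $U$ with $UW(z)U^*=W(z+1)$ for $z=0,1$. Conjugate basis of $\mathbb C^2$: $|\tilde x\rangle=2^{-1/2}\sum_z(-1)^{xz}|z\rangle$. Dual channel: choose purifications $|\varphi_z\rangle_{BD}$ of $W(z)$, let $\mathcal H_C\cong\mathbb C^2$, define the isometry $V|z\rangle_A=|z\rangle_C|\varphi_z\rangle_{BD}$, put $|\theta_x\rangle=V|\tilde x\rangle_A$ and $W^\perp(x)=\mathrm{Tr}_B|\theta_x\rangle\langle\theta_x|$. *)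

(* Defs.v *)
(* Quantum-information notions over an arbitrary
   numClosedFieldType C (playing the role of the complex numbers). *)
From HB Require Import structures.
From mathcomp Require Import all_boot all_order all_algebra.
Set Implicit Arguments. Unset Strict Implicit. Unset Printing Implicit Defensive.
Import Order.TTheory GRing.Theory Num.Theory.
Local Open Scope ring_scope.

Section QDefs.
Variable C : numClosedFieldType.

Definition adjmx m n (A : 'M[C]_(m, n)) : 'M[C]_(n, m) := (map_mx Num.conj A)^T.

Definition psdmx n (A : 'M[C]_n) : Prop :=
  adjmx A = A /\ forall u : 'rV[C]_n, 0 <= (u *m A *m adjmx u) 0 0.

Definition densitymx n (A : 'M[C]_n) : Prop := psdmx A /\ \tr A = 1.

Definition unitary n (U : 'M[C]_n) : Prop := U *m adjmx U = 1%:M.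

Definition sqrtmx n (A : 'M[C]_n) : 'M[C]_n :=
  invmx (spectralmx A) *m diag_mx (map_mx sqrtC (spectral_diag A)) *m spectralmx A.

Definition trnorm m n (X : 'M[C]_(m, n)) : C := \tr (sqrtmx (adjmx X *m X)).

Definition fidelity n (rho sigma : 'M[C]_n) : C := trnorm (sqrtmx rho *m sqrtmx sigma).

(* Tensor products.  C^a (x) C^b is C^(a*b), the basis vector |i>|j>
   having index mxvec_index i j. *)
Definition tket a b (u : 'cV[C]_a) (v : 'cV[C]_b) : 'cV[C]_(a * b) :=
  (mxvec (u *m v^T))^T.

Definition ketbra n (psi : 'cV[C]_n) : 'M[C]_n := psi *m adjmx psi.

Definition ptrace2 a b (X : 'M[C]_(a * b)) : 'M[C]_a :=
  \matrix_(i, i') \sum_(j < b) X (mxvec_index i j) (mxvec_index i' j).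

Definition ptrace_mid a b c (X : 'M[C]_(a * (b * c))) : 'M[C]_(a * c) :=
  \matrix_(k, k')
    let: (i, l) := pair_of_mxvec_index (mxvec_indexP k) in
    let: (i', l') := pair_of_mxvec_index (mxvec_indexP k') in
    \sum_(j < b) X (mxvec_index i (mxvec_index j l))
                   (mxvec_index i' (mxvec_index j l')).

End QDefs.

(* Main.v *)
Require Import Defs.
From HB Require Import structures.
From mathcomp Require Import all_boot all_order all_algebra ring.
Import Order.TTheory GRing.Theory Num.Theory.
Set Implicit Arguments. Unset Strict Implicit. Unset Printing Implicit Defensive.
Local Open Scope ring_scope.

Section Aux.
Variable C : numClosedFieldType.

Lemma adjmxE m n (A : 'M[C]_(m, n)) : adjmx A = (A ^t* )%sesqui.
Proof. by apply/matrixP => i j; rewrite !mxE. Qed.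

Lemma adjmxK m n (A : 'M[C]_(m, n)) : adjmx (adjmx A) = A.
Proof. by apply/matrixP => i j; rewrite !mxE conjCK. Qed.

Lemma adjmxM m n p (A : 'M[C]_(m, n)) (B : 'M[C]_(n, p)) :
  adjmx (A *m B) = adjmx B *m adjmx A.
Proof.
apply/matrixP => i j; rewrite !mxE rmorph_sum; apply: eq_bigr => k _.
by rewrite !mxE rmorphM mulrC.
Qed.

Lemma adjmxD m n (A B : 'M[C]_(m, n)) : adjmx (A + B) = adjmx A + adjmx B.
Proof. by apply/matrixP => i j; rewrite !mxE rmorphD. Qed.

Lemma adjmxN m n (A : 'M[C]_(m, n)) : adjmx (- A) = - adjmx A.
Proof. by apply/matrixP => i j; rewrite !mxE rmorphN. Qed.

Lemma adjmxZ m n a (A : 'M[C]_(m, n)) : adjmx (a *: A) = a^* *: adjmx A.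
Proof. by apply/matrixP => i j; rewrite !mxE rmorphM. Qed.

Lemma adjmx_tr m n (A : 'M[C]_(m, n)) : adjmx (A^T) = (adjmx A)^T.
Proof. by apply/matrixP => i j; rewrite !mxE. Qed.

Lemma adjmx_diag n (a : 'rV[C]_n) : adjmx (diag_mx a) = diag_mx (map_mx Num.conj a).
Proof.
apply/matrixP => i j; rewrite !mxE; case: (eqVneq i j) => [->|ne].
  by rewrite !mulr1n.
by rewrite !mulr0n rmorph0.
Qed.

Lemma psd_mul_adj m k (A : 'M[C]_(m, k)) : psdmx (A *m adjmx A).
Proof.
split; first by rewrite adjmxM adjmxK.
move=> u; rewrite !mulmxA -[u *m A *m adjmx A *m adjmx u]mulmxA -adjmxM.
rewrite !mxE; apply: sumr_ge0 => i _; rewrite !mxE.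
exact: mul_conjC_ge0.
Qed.


Lemma mul_adj_entry m k p (X : 'M[C]_(m, k)) (Y : 'M[C]_(p, k)) i j :
  (X *m adjmx Y) i j = (row i X *m adjmx (row j Y)) 0 0.
Proof. by rewrite !mxE; apply: eq_bigr => t _; rewrite !mxE. Qed.

Section PSD.
Variables (n : nat) (A : 'M[C]_n).
Hypothesis Apsd : psdmx A.
Let P := spectralmx A.
Let l := spectral_diag A.

Lemma P_unitary : P *m adjmx P = 1%:M.
Proof. by rewrite adjmxE; apply/unitarymxP/spectral_unitarymx. Qed.

Lemma invP : invmx P = adjmx P.
Proof. by rewrite adjmxE invmx_unitary // spectral_unitarymx. Qed.

Lemma psd_normal : A \is normalmx.
Proof. by rewrite qualifE -adjmxE Apsd.1. Qed.

Lemma psd_decomp : A = adjmx P *m diag_mx l *m P.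
Proof. by rewrite -invP; apply/orthomx_spectralP/psd_normal. Qed.

Lemma psd_diag : diag_mx l = P *m A *m adjmx P.
Proof.
by rewrite psd_decomp !mulmxA P_unitary mul1mx -mulmxA P_unitary mulmx1.
Qed.

Lemma psd_eig_ge0 i : 0 <= l 0 i.
Proof.
have -> : l 0 i = diag_mx l i i by rewrite mxE eqxx mulr1n.
rewrite psd_diag mul_adj_entry row_mul; exact: Apsd.2.
Qed.

Lemma sqrtmxE : sqrtmx A = adjmx P *m diag_mx (map_mx sqrtC l) *m P.
Proof. by rewrite /sqrtmx invP. Qed.

Lemma sqrtmx_herm : adjmx (sqrtmx A) = sqrtmx A.
Proof.
rewrite sqrtmxE !adjmxM adjmxK adjmx_diag mulmxA; congr (_ *m _ *m _).
by apply/matrixP => i j; rewrite !mxE geC0_conj // sqrtC_ge0 psd_eig_ge0.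
Qed.

Lemma sqrtmx_sqr : sqrtmx A *m sqrtmx A = A.
Proof.
rewrite sqrtmxE !mulmxA -[_ *m P *m adjmx P]mulmxA P_unitary mulmx1.
rewrite -[_ *m diag_mx _ *m diag_mx _]mulmxA mulmx_diag [in RHS]psd_decomp.
congr (_ *m diag_mx _ *m _); apply/rowP => j; rewrite !mxE -expr2 sqrtCK.
by [].
Qed.

Lemma tr_sqrtmx : \tr (sqrtmx A) = \sum_i sqrtC (l 0 i).
Proof.
rewrite sqrtmxE mxtrace_mulC mulmxA P_unitary mul1mx mxtrace_diag.
by apply: eq_bigr => i _; rewrite mxE.
Qed.

End PSD.

Lemma char_poly_sim n (P M : 'M[C]_n) : P \in unitmx ->
  char_poly (invmx P *m M *m P) = char_poly M.
Proof.
move=> Pu; rewrite /char_poly /char_poly_mx.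
have hX : ('X%:M : 'M[{poly C}]_n) =
    map_mx polyC (invmx P) *m 'X%:M *m map_mx polyC P.
  by rewrite -mulmxA -scalar_mxC mulmxA -map_mxM mulVmx // map_mx1 mul1mx.
rewrite {1}hX !map_mxM -mulmxBl -mulmxBr !det_mulmx mulrC mulrA -det_mulmx.
rewrite -map_mxM mulmxV // map_mx1 det1 mul1r.
reflexivity.
Qed.

Lemma char_poly_diag n (a : 'rV[C]_n) :
  char_poly (diag_mx a) = \prod_i ('X - (a 0 i)%:P).
Proof.
rewrite char_poly_trig ?diag_mx_is_trig //.
by apply: eq_bigr => i _; rewrite mxE eqxx mulr1n.
Qed.

Lemma char_poly_tr n (M : 'M[C]_n) : char_poly M^T = char_poly M.
Proof.
by rewrite /char_poly -det_tr /char_poly_mx linearB /= tr_scalar_mx -map_trmx trmxK.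
Qed.

Lemma char_poly_AB m n (A : 'M[C]_(m, n)) (B : 'M[C]_(n, m)) :
  char_poly (A *m B) * 'X^n = char_poly (B *m A) * 'X^m.
Proof.
pose M1 := block_mx (A *m B) 0 B (0 : 'M_n).
pose M2 := block_mx (0 : 'M_m) 0 B (B *m A).
pose S := block_mx 1%:M A 0 (1%:M : 'M_n).
pose S' := block_mx 1%:M (- A) 0 (1%:M : 'M_n).
have SS' : S' *m S = 1%:M.
  by rewrite mulmx_block !(mul1mx, mul0mx, mulmx0, mulmx1, addr0, add0r, subrr, addNr) -scalar_mx_block.
have Su : S \in unitmx.
  by rewrite unitmxE det_ublock !det1 mulr1 unitr1.
have invS : invmx S = S'.
  by rewrite -[invmx S]mul1mx -SS' -mulmxA mulmxV // mulmx1.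
have e : invmx S *m M1 *m S = M2.
  rewrite invS mulmx_block !(mul1mx, mul0mx, mulmx0, addr0, add0r) mulNmx subrr.
  by rewrite mulmx_block !(mul1mx, mul0mx, mulmx0, mulmx1, addr0, add0r).
have h0 : forall p q, ((0 : 'M[C]_(p, q)) ^ polyC)%sesqui = 0.
  by move=> p q; apply/matrixP => i j; rewrite !mxE.
have c1 : char_poly M1 = char_poly (A *m B) * 'X^n.
  rewrite /char_poly /char_poly_mx scalar_mx_block map_block_mx opp_block_mx.
  by rewrite add_block_mx !h0 !subr0 det_lblock det_scalar.
have c2 : char_poly M2 = char_poly (B *m A) * 'X^m.
  rewrite /char_poly /char_poly_mx scalar_mx_block map_block_mx opp_block_mx.
  by rewrite add_block_mx !h0 !subr0 det_lblock det_scalar mulrC.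
by rewrite -c1 -c2 -e char_poly_sim.
Qed.

Lemma iter_mul_X k : iter k (GRing.mul ('X - (0 : C)%:P)) 1 = 'X^k.
Proof. by elim: k => [|k IH]; rewrite ?expr0 // /= IH subr0 exprS. Qed.

Lemma iter_add0 (x : C) k : x = 0 -> iter k (GRing.add x) 0 = 0.
Proof. by move=> ->; elim: k => //= k ->; rewrite addr0. Qed.

Lemma prod_seq m (a : 'rV[C]_m) k :
  \prod_(x <- [seq a 0 i | i <- enum 'I_m] ++ nseq k 0) ('X - x%:P) =
  (\prod_i ('X - (a 0 i)%:P)) * 'X^k.
Proof. by rewrite big_cat big_map big_enum /= big_nseq iter_mul_X. Qed.

Lemma sum_seq m (a : 'rV[C]_m) k (f : C -> C) : f 0 = 0 ->
  \sum_(x <- [seq a 0 i | i <- enum 'I_m] ++ nseq k 0) f x = \sum_i f (a 0 i).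
Proof. by move=> f0; rewrite big_cat big_map big_enum /= big_nseq iter_add0 ?addr0. Qed.

Lemma sum_roots m n (a : 'rV[C]_m) (b : 'rV[C]_n) k l (f : C -> C) : f 0 = 0 ->
  (\prod_i ('X - (a 0 i)%:P)) * 'X^k = (\prod_j ('X - (b 0 j)%:P)) * 'X^l ->
  \sum_i f (a 0 i) = \sum_j f (b 0 j).
Proof.
move=> f0 e; rewrite -(@sum_seq _ a k f f0) -(@sum_seq _ b l f f0); apply: perm_big.
by apply: prod_XsubC_eq; rewrite !prod_seq.
Qed.

Lemma char_psd n (A : 'M[C]_n) : A \is normalmx ->
  char_poly A = \prod_i ('X - (spectral_diag A 0 i)%:P).
Proof.
move=> An; rewrite {1}(orthomx_spectralP An) char_poly_sim ?spectral_unit //.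
exact: char_poly_diag.
Qed.

Lemma mxvec_index_inj m n (i i' : 'I_m) (j j' : 'I_n) :
  mxvec_index i j = mxvec_index i' j' -> (i, j) = (i', j').
Proof. by move/cast_ord_inj/enum_rank_inj. Qed.

Lemma pair_mxvec m n (i : 'I_m) (j : 'I_n) :
  pair_of_mxvec_index (mxvec_indexP (mxvec_index i j)) = (i, j).
Proof.
suff H : forall k (p : is_mxvec_index k), k = mxvec_index i j ->
  pair_of_mxvec_index p = (i, j) by exact: H.
by move=> k p; case: p => i' j' /= /mxvec_index_inj.
Qed.

Lemma big_mxvec m n (F : 'I_(m * n) -> C) :
  \sum_k F k = \sum_i \sum_j F (mxvec_index i j).
Proof.
rewrite pair_big /= (reindex (uncurry (@mxvec_index m n))) /=.
  by apply: eq_bigr => -[i j].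
by case: (curry_mxvec_bij m n) => g h1 h2; exists g => x _; [apply: h1|apply: h2].
Qed.

Definition Tm a b c (v : 'cV[C]_(a * (b * c))) : 'M[C]_(a * c, b) :=
  \matrix_(k, i) v (mxvec_index (pair_of_mxvec_index (mxvec_indexP k)).1
         (mxvec_index i (pair_of_mxvec_index (mxvec_indexP k)).2)) 0.

Lemma ptrace_mid_ketbra a b c (v : 'cV[C]_(a * (b * c))) :
  ptrace_mid (ketbra v) = Tm v *m adjmx (Tm v).
Proof.
apply/matrixP => k k'; rewrite !mxE.
under [RHS]eq_bigr do rewrite !mxE.
case: (pair_of_mxvec_index (mxvec_indexP k)) => i l.
case: (pair_of_mxvec_index (mxvec_indexP k')) => i' l' /=.
by apply: eq_bigr => j _; rewrite !mxE big_ord1 !mxE.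
Qed.

Lemma Tm_E a b c (v : 'cV[C]_(a * (b * c))) x l i :
  Tm v (mxvec_index x l) i = v (mxvec_index x (mxvec_index i l)) 0.
Proof. by rewrite mxE pair_mxvec. Qed.

Lemma tketE a b (u : 'cV[C]_a) (v : 'cV[C]_b) x q :
  tket u v (mxvec_index x q) 0 = u x 0 * v q 0.
Proof. by rewrite /tket mxE mxvecE mxE big_ord1 mxE. Qed.

End Aux.

Unset Implicit Arguments.
Unset Strict Implicit.

Theorem proposition3 (C : numClosedFieldType) (n d : nat)
    (W : 'I_2 -> 'M[C]_n)
    (Wdens : forall z, densitymx (W z))
    (Wsym : exists U : 'M[C]_n, unitary U /\
              forall z : 'I_2, U *m W z *m adjmx U = W (z + 1)%R)
    (phi : 'I_2 -> 'cV[C]_(n * d))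
    (phi_pur : forall z, ptrace2 (ketbra (phi z)) = W z) :
  let V : 'M[C]_(2 * (n * d), 2) :=
    \sum_(z < 2) tket (delta_mx z 0 : 'cV[C]_2) (phi z) *m (delta_mx z 0)^T in
  let xt (x : 'I_2) : 'cV[C]_2 :=
    (sqrtC 2)^-1 *: \sum_(z < 2) ((-1) ^+ (x * z)%N *: delta_mx z 0) in
  let theta (x : 'I_2) := V *m xt x in
  let Wperp (x : 'I_2) : 'M[C]_(2 * d) := ptrace_mid (ketbra (theta x)) in
  2^-1 * trnorm (W 0 - W 1) = fidelity (Wperp 0) (Wperp 1).
Proof.
move=> V xt theta Wperp.
pose e : C := (sqrtC 2)^-1.
have VE c q j : V (mxvec_index c q) j = (c == j)%:R * phi j q 0.
  rewrite /V summxE (bigD1 c) //= big1 => [|z /negPf zc]; rewrite !mxE big_ord1.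
    rewrite tketE !mxE !eqxx addr0 /=.
    by case: (eqVneq c j) => [->|ne] /=; rewrite ?mulr1 ?mul1r ?mulr0 ?mul0r.
  by rewrite tketE !mxE eq_sym zc !mul0r.
have xtE x c : xt x c 0 = e * (-1) ^+ (x * c).
  rewrite /xt mxE summxE (bigD1 c) //= big1 => [|z /negPf zc]; rewrite !mxE.
    by rewrite !eqxx mulr1 addr0.
  by rewrite eq_sym zc mulr0.
have thetaE x c q : theta x (mxvec_index c q) 0 = e * (-1) ^+ (x * c) * phi c q 0.
  rewrite /theta mxE (bigD1 c) //= big1 => [|j /negPf jc]; rewrite VE.
    by rewrite eqxx mul1r xtE addr0 mulrC.
  by rewrite eq_sym jc !mul0r.
pose T x := Tm (theta x).
have WpE x : Wperp x = T x *m adjmx (T x) by exact: ptrace_mid_ketbra.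
have TE x c l i : T x (mxvec_index c l) i = e * (-1) ^+ (x * c) * phi c (mxvec_index i l) 0.
  by rewrite Tm_E thetaE.
have adjE m1 m2 (A : 'M[C]_(m1, m2)) i j : adjmx A i j = (A j i)^* by rewrite !mxE.
have WE z i i' : W z i i' = \sum_l phi z (mxvec_index i l) 0 * (phi z (mxvec_index i' l) 0)^*.
  by rewrite -phi_pur !mxE; apply: eq_bigr => l _; rewrite !mxE big_ord1 !mxE.
have Wh z : adjmx (W z) = W z := (Wdens z).1.1.
set H := W 0 - W 1.
have Hh : adjmx H = H by rewrite adjmxD adjmxN !Wh.
have ee : e * e = 2^-1 by rewrite -invfM -expr2 sqrtCK.
have ec : e^* = e by rewrite geC0_conj // invr_ge0 sqrtC_ge0 ler0n.
have l01 : lift ord0 ord0 = 1 :> 'I_2 by apply/val_inj.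
have KE : adjmx (T 1) *m T 0 = 2^-1 *: H^T.
  apply/matrixP => i i'; rewrite !mxE big_mxvec big_ord_recl big_ord1 /=.
  rewrite !WE mulrBr !mulr_sumr -sumrN; congr (_ + _); apply: eq_bigr => l _; rewrite adjE !TE /=.
  1-2: rewrite ?l01 /= -?[(1 %% 2 * 0)%N]/0%N -?[(0 * 0)%N]/0%N -?[(0 * bump 0 0)%N]/0%N.
  1-2: rewrite -?[(1 %% 2 * bump 0 0)%N]/1%N -?[ord0]/(0 : 'I_2). Show.
  1-2: rewrite expr0 ?expr1 !rmorphM /= ?rmorph1 ?rmorphN1 ec -ee; ring.
have h2c : (2^-1 : C)^* = 2^-1 by rewrite geC0_conj // invr_ge0 ler0n.
have KE' : adjmx (T 0) *m T 1 = 2^-1 *: H^T.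
  by rewrite -[T 1]adjmxK -adjmxM KE adjmxZ adjmx_tr Hh h2c.
have psdT x : psdmx (Wperp x) by rewrite WpE; exact: psd_mul_adj.
rewrite /fidelity /trnorm.
move: (sqrtmx_herm (psdT 0)) (sqrtmx_sqr (psdT 0)) (sqrtmx_herm (psdT 1)) (sqrtmx_sqr (psdT 1)).
generalize (sqrtmx (Wperp 0)) (sqrtmx (Wperp 1)) => S0 S1 h0 q0 h1 q1.
set X := S0 *m S1.
set Y := S1 *m T 0.
have QY : adjmx X *m X = Y *m adjmx Y.
  rewrite /X /Y adjmxM h0 h1 !mulmxA -[S1 *m S0 *m S0]mulmxA q0.
  by rewrite WpE adjmxM h1 !mulmxA.
pose c : C := 2^-1 * 2^-1.
have YY : adjmx Y *m Y = c *: (adjmx H *m H)^T.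
  rewrite /Y adjmxM h1 !mulmxA -[adjmx (T 0) *m S1 *m S1]mulmxA q1 WpE !mulmxA -[adjmx (T 0) *m T 1 *m adjmx (T 1) *m T 0]mulmxA.
  by rewrite KE KE' -scalemxAl -scalemxAr scalerA -trmx_mul Hh.
have psdG : psdmx (adjmx H *m H).
  by rewrite -{2}[H]adjmxK; exact: psd_mul_adj.
have psdQ : psdmx (adjmx X *m X).
  by rewrite -{2}[X]adjmxK; exact: psd_mul_adj.
pose l := spectral_diag (adjmx H *m H).
pose mu := spectral_diag (adjmx X *m X).
have charQ := char_psd (psd_normal psdQ).
have charYY : char_poly (adjmx Y *m Y) = \prod_i ('X - ((c *: l) 0 i)%:P).
  rewrite YY -char_poly_tr.
  have -> : (c *: (adjmx H *m H)^T)^T = c *: (adjmx H *m H) by apply/matrixP => i j; rewrite !mxE.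
  rewrite {1}(orthomx_spectralP (psd_normal psdG)) -/l scalemxAl scalemxAr.
  have -> : c *: diag_mx l = diag_mx (c *: l).
    by apply/matrixP => i j; rewrite !mxE mulrnAr.
  by rewrite char_poly_sim ?spectral_unit // char_poly_diag.
have AB := char_poly_AB Y (adjmx Y).
rewrite -QY charQ charYY in AB.
have := sum_roots (@sqrtC0 C) AB.
rewrite !tr_sqrtmx -/l -/mu => ->.
have c0 : 0 <= c by rewrite mulr_ge0 // invr_ge0 ler0n.
have sc : sqrtC c = 2^-1 by rewrite /c -expr2 sqrCK // invr_ge0 ler0n.
rewrite mulr_sumr; apply: eq_bigr => i _.
by rewrite mxE sqrtCM ?nnegrE ?sc // psd_eig_ge0.
Qed.
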